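(* Let $V$ be a Calabi–Yau threefold with $h^{2,0}(V)=0$ and $h^{1,1}(V)=3$, with cup-product cubic form $f$ and Kähler cone $\mathcal{K}(V)$. Suppose there is a nonzero point $y^0$ on the boundary of $\mathcal{K}(V)$ such that: <ul> <li>$f(y^0)\neq0$;</li> <li>$H(y^0)=0$;</li> <li>$\mathrm{tr}\big(B(y^0)\,C(i,j)\big)\neq0$ for some $i,j\in\{1,2,3\}$.</li> </ul> Then the scalar curvature of the AMWP metric on $\mathcal{K}_{\mathbb{C}}(V)$ is unbounded above as one approaches the ray through $y^0$. That is, for every neighbourhood $N$ of $y^0$ in $\mathbb{R}^3$, the scalar curvature is unbounded above on $\{x+iy: y\in N\cap\mathcal{K}(V)\}$.
   Context: $f(y_1,y_2,y_3)$ is the cup-product cubic on $H^2(V,\mathbb{R})\cong\mathbb{R}^3$ in linear coordinates. $H=\det(\partial^2f/\partial y_i\partial y_j)$ is its Hessian determinant. $G$ is the matrix $G_{ij}=(\partial f/\partial y_i)(\partial f/\partial y_j)-f\,\partial^2 f/\partial y_i\partial y_j$, and $B=\mathrm{adj}(G)$ is its adjugate (transposed cofactor matrix). $C(i,j)$ is the $3\times3$ matrix with entries $C(i,j)_{pq}=f_{ijp}f_{ijq}$, where $f_{ijp}=\partial^3 f/\partial y_i\partial y_j\partial y_p$. $\mathcal{K}_{\mathbb{C}}(V)=(H^2(V,\mathbb{R})+i\mathcal{K}(V))/\mathrm{im}H^2(V,\mathbb{Z})$, with coordinates $t_j=x_j+iy_j$. The AMWP metric is the Kähler metric with potential $-\log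 f(y)$. Its scalar curvature is the usual scalar curvature of this Kähler metric (with the convention that the upper half-plane metric with potential $-\log\mathrm{Im}\,t$ has negative curvature). *)

(* Defs.v *)
From Stdlib Require Import Reals ClassicalEpsilon.
Open Scope R_scope.

(** Points of R^3 are functions nat -> R; only coordinates 0,1,2 matter
    (coordinates y_1,y_2,y_3 of the paper are indices 0,1,2). *)
Definition vec := nat -> R.

Definition sum3 (F : nat -> R) : R := F 0%nat + F 1%nat + F 2%nat.

Definition upd (y : vec) (i : nat) (s : R) : vec :=
  fun k => if Nat.eqb k i then s else y k.

(** genuine partial derivative d/dy_i (chosen by epsilon; it is the
    derivative wherever the partial derivative exists). *)
Definition pd (i : nat) (F : vec -> R) : vec -> R :=
  fun y => epsilon (inhabits 0)
             (fun l => derivable_pt_lim (fun s => F (upd y i s)) (y i) l).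

(** 3x3 matrices as functions nat -> nat -> R (indices mod 3 in cofactors). *)
Definition cof3 (M : nat -> nat -> R) (i j : nat) : R :=
  let i1 := ((i + 1) mod 3)%nat in let i2 := ((i + 2) mod 3)%nat in
  let j1 := ((j + 1) mod 3)%nat in let j2 := ((j + 2) mod 3)%nat in
  M i1 j1 * M i2 j2 - M i1 j2 * M i2 j1.
Definition det3 (M : nat -> nat -> R) : R := sum3 (fun j => M 0%nat j * cof3 M 0%nat j).
Definition adj3 (M : nat -> nat -> R) : nat -> nat -> R := fun i j => cof3 M j i.
Definition tr3 (M : nat -> nat -> R) : R := sum3 (fun i => M i i).
Definition mul3 (M N : nat -> nat -> R) : nat -> nat -> R :=
  fun i k => sum3 (fun j => M i j * N j k).

Definition cubic (d : nat -> nat -> nat -> R) (y : vec) : R :=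
  sum3 (fun i => sum3 (fun j => sum3 (fun k => d i j k * y i * y j * y k))).

Definition Hess (f : vec -> R) (y : vec) : R := det3 (fun i j => pd i (pd j f) y).
Definition Gmat (f : vec -> R) (y : vec) : nat -> nat -> R :=
  fun i j => pd i f y * pd j f y - f y * pd i (pd j f) y.
Definition Bmat (f : vec -> R) (y : vec) : nat -> nat -> R := adj3 (Gmat f y).
Definition Cmat (f : vec -> R) (i j : nat) (y : vec) : nat -> nat -> R :=
  fun p q => pd i (pd j (pd p f)) y * pd i (pd j (pd q f)) y.

(** AMWP metric: Kaehler potential -log f(Im t) on the tube domain.
    In coordinates t_j = x_j + i y_j, for a function of y only,
    d/dt_i d/dtbar_j = (1/4) d^2/dy_i dy_j, so g_{i jbar} depends only on y. *)
Definition potential (f : vec -> R) : vec -> R := fun y => - ln (f y).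
Definition gmet (f : vec -> R) (y : vec) : nat -> nat -> R :=
  fun i j => / 4 * pd i (pd j (potential f)) y.
Definition logdetg (f : vec -> R) : vec -> R := fun y => ln (det3 (gmet f y)).
(** Ricci form R_{i jbar} = - d_i d_jbar log det g = -(1/4) d^2/dy_i dy_j log det g;
    scalar curvature s = g^{i jbar} R_{i jbar}.  (Upper half-plane: s = -2 < 0.) *)
Definition scal (f : vec -> R) (y : vec) : R :=
  sum3 (fun i => sum3 (fun j =>
    (adj3 (gmet f y) i j / det3 (gmet f y)) *
    (- / 4 * pd i (pd j (logdetg f)) y))).

Definition close (y z : vec) (eps : R) : Prop :=
  Rabs (y 0%nat - z 0%nat) < eps /\ Rabs (y 1%nat - z 1%nat) < eps /\
  Rabs (y 2%nat - z 2%nat) < eps.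

Definition nonzero3 (y : vec) : Prop :=
  y 0%nat <> 0 \/ y 1%nat <> 0 \/ y 2%nat <> 0.

Definition kahler_cone_like (f : vec -> R) (K : vec -> Prop) : Prop :=
  (forall y, K y -> exists eps, eps > 0 /\ forall z, close z y eps -> K z) /\
  (forall y z lam, K y -> K z -> 0 <= lam <= 1 ->
     K (fun k => lam * y k + (1 - lam) * z k)) /\
  (forall y lam, K y -> lam > 0 -> K (fun k => lam * y k)) /\
  (forall y, K y -> f y > 0) /\
  (* Hodge index: the AMWP metric is positive definite on K *)
  (forall y v, K y -> nonzero3 v ->
     sum3 (fun i => sum3 (fun j => gmet f y i j * v i * v j)) > 0).

Definition in_boundary (K : vec -> Prop) (y : vec) : Prop :=
  ~ K y /\ forall eps, eps > 0 -> exists z, K z /\ close z y eps.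

(* Main.v *)
Require Import Defs.
From Stdlib Require Import Reals Lra Lia Psatz Nsatz ClassicalEpsilon FunctionalExtensionality.
Open Scope R_scope.

Lemma upd_same (y : vec) (i : nat) : upd y i (y i) = y.
Proof.
  apply functional_extensionality; intro k; unfold upd.
  destruct (Nat.eqb_spec k i); subst; reflexivity.
Qed.

Lemma upd_at (y : vec) i s : upd y i s i = s.
Proof. unfold upd; rewrite Nat.eqb_refl; reflexivity. Qed.

Lemma upd_upd (y : vec) i s t : upd (upd y i s) i t = upd y i t.
Proof.
  apply functional_extensionality; intro k; unfold upd.
  destruct (Nat.eqb k i); reflexivity.
Qed.

Lemma pd_spec (F : vec -> R) i y l :
  derivable_pt_lim (fun s => F (upd y i s)) (y i) l -> pd i F y = l.
Proof.
  intro H. unfold pd.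
  assert (E : exists l0, derivable_pt_lim (fun s => F (upd y i s)) (y i) l0) by (exists l; exact H).
  pose proof (epsilon_spec (inhabits 0) _ E) as H2.
  eapply uniqueness_limite; eauto.
Qed.

Lemma dl_local (F1 F2 : R -> R) x l delta :
  delta > 0 -> (forall s, Rabs (s - x) < delta -> F1 s = F2 s) ->
  derivable_pt_lim F1 x l -> derivable_pt_lim F2 x l.
Proof.
  intros Hd Heq H eps Heps.
  destruct (H eps Heps) as [d1 Hd1].
  assert (Hm : 0 < Rmin d1 delta) by (apply Rmin_pos; [apply (cond_pos d1)|lra]).
  exists (mkposreal _ Hm). intros h Hh Hlt. simpl in Hlt.
  rewrite <- (Heq x) by (rewrite Rminus_diag, Rabs_R0; lra).
  rewrite <- (Heq (x + h)).
  - apply Hd1; auto. apply Rlt_le_trans with (1 := Hlt); apply Rmin_l.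
  - replace (x + h - x) with h by ring. apply Rlt_le_trans with (1 := Hlt); apply Rmin_r.
Qed.

Definition LO (U : vec -> Prop) : Prop :=
  forall y i, (i < 3)%nat -> U y -> exists delta, delta > 0 /\
    forall s, Rabs (s - y i) < delta -> U (upd y i s).

Lemma pd_loc (U : vec -> Prop) (G Gj : vec -> R) i y l :
  (i < 3)%nat -> LO U -> U y -> (forall z, U z -> G z = Gj z) ->
  derivable_pt_lim (fun s => Gj (upd y i s)) (y i) l -> pd i G y = l.
Proof.
  intros Hi HLO Hy Heq Hd. apply pd_spec.
  destruct (HLO y i Hi Hy) as [delta [Hdp Hdel]].
  apply (dl_local (fun s => Gj (upd y i s)) _ _ _ delta Hdp); auto.
  intros s Hs. symmetry. apply Heq. apply Hdel; auto.
Qed.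

Lemma dl_cubic (g : R -> R) x a b c e :
  (forall s, g s = a + b*(s-x) + c*(s-x)^2 + e*(s-x)^3) -> derivable_pt_lim g x b.
Proof.
  intros Hg eps Heps.
  set (K := Rabs c + Rabs e + 1).
  assert (HK : K > 0) by (unfold K; pose proof (Rabs_pos c); pose proof (Rabs_pos e); lra).
  assert (Hm : 0 < Rmin 1 (eps / K)) by (apply Rmin_pos; [lra| apply Rdiv_lt_0_compat; lra]).
  exists (mkposreal _ Hm). intros h Hh Hlt. simpl in Hlt.
  rewrite !Hg.
  replace ((a + b * (x + h - x) + c * (x + h - x) ^ 2 + e * (x + h - x) ^ 3 -
     (a + b * (x - x) + c * (x - x) ^ 2 + e * (x - x) ^ 3)) / h - b) with (h * (c + e * h)) by (field; auto).
  assert (H1 : Rabs h < 1) by (apply Rlt_le_trans with (1 := Hlt); apply Rmin_l).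
  assert (H2 : Rabs h < eps / K) by (apply Rlt_le_trans with (1 := Hlt); apply Rmin_r).
  rewrite Rabs_mult.
  assert (H3 : Rabs (c + e * h) <= K).
  { unfold K. eapply Rle_trans; [apply Rabs_triang|]. rewrite Rabs_mult.
    assert (Rabs e * Rabs h <= Rabs e * 1) by (apply Rmult_le_compat_l; [apply Rabs_pos|lra]). lra. }
  assert (H4 : Rabs h * Rabs (c + e * h) <= Rabs h * K) by (apply Rmult_le_compat_l; [apply Rabs_pos|auto]).
  assert (H5 : Rabs h * K < eps / K * K) by (apply Rmult_lt_compat_r; auto).
  replace (eps / K * K) with eps in H5 by (field; lra). lra.
Qed.

Lemma dl_cont (g : R -> R) x l : derivable_pt_lim g x l -> continuity_pt g x.
Proof. intro H. apply derivable_continuous_pt. exists l. exact H. Qed.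

Lemma LO_pos (P : vec -> R) :
  (forall y i, (i < 3)%nat -> continuity_pt (fun s => P (upd y i s)) (y i)) -> LO (fun z => P z > 0).
Proof.
  intros Hc y i Hi Hy.
  destruct (Hc y i Hi (P y) Hy) as [alp [Halp Hal]].
  exists alp. split; auto. intros s Hs.
  destruct (Req_dec s (y i)) as [E|E].
  - subst. rewrite upd_same. auto.
  - assert (Hd : D_x no_cond (y i) s /\ dist R_met s (y i) < alp).
    { split. split. exact I. auto. simpl. unfold R_dist. auto. }
    specialize (Hal s Hd). simpl in Hal. unfold R_dist in Hal.
    rewrite upd_same in Hal.
    apply Rabs_def2 in Hal. lra.
Qed.

Lemma LO_and (U V : vec -> Prop) : LO U -> LO V -> LO (fun z => U z /\ V z).
Proof.
  intros HU HV y i Hi [Hu Hv].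
  destruct (HU y i Hi Hu) as [d1 [H1 H1']]. destruct (HV y i Hi Hv) as [d2 [H2 H2']].
  exists (Rmin d1 d2). split. apply Rmin_pos; auto.
  intros s Hs. split.
  apply H1'. apply Rlt_le_trans with (1 := Hs); apply Rmin_l.
  apply H2'. apply Rlt_le_trans with (1 := Hs); apply Rmin_r.
Qed.

Definition cc (d : nat -> nat -> nat -> R) (p q r : nat) : R :=
  d p q r + d p r q + d q p r + d q r p + d r p q + d r q p.
Definition fP d (i : nat) (y : vec) : R := / 2 * sum3 (fun q => sum3 (fun r => cc d i q r * y q * y r)).
Definition fPP d (i j : nat) (y : vec) : R := sum3 (fun r => cc d i j r * y r).
Definition Am d (y : vec) : nat -> nat -> R := fun i j => fPP d i j y.
Definition Hp d (y : vec) : R := det3 (Am d y).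
Definition Cm d (p : nat) : nat -> nat -> R := fun i j => cc d p i j.
Definition madd (X Y : nat -> nat -> R) : nat -> nat -> R := fun a b => X a b + Y a b.
Definition mixadj (X Y : nat -> nat -> R) : nat -> nat -> R :=
  fun p q => adj3 (madd X Y) p q - adj3 X p q - adj3 Y p q.
Definition HP d (i : nat) (y : vec) : R := tr3 (mul3 (adj3 (Am d y)) (Cm d i)).
Definition HPP d (i j : nat) (y : vec) : R := tr3 (mul3 (mixadj (Am d y) (Cm d i)) (Cm d j)).

Ltac ex3 := unfold sum3, upd; simpl.

Lemma cubic_line d y i s : (i < 3)%nat ->
  cubic d (upd y i s) = cubic d y + fP d i y * (s - y i) + (fPP d i i y / 2) * (s - y i)^2
     + (cc d i i i / 6) * (s - y i)^3.
Proof.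
  intro Hi. unfold cubic, fP, fPP, cc.
  destruct i as [|[|[|i]]]; try lia; ex3; field.
Qed.

Lemma fP_line d j y i s : (i < 3)%nat ->
  fP d j (upd y i s) = fP d j y + fPP d i j y * (s - y i) + (cc d i i j / 2) * (s - y i)^2 + 0 * (s - y i)^3.
Proof.
  intro Hi. unfold fP, fPP, cc.
  destruct i as [|[|[|i]]]; try lia; ex3; field.
Qed.

Lemma fPP_line d j k y i s : (i < 3)%nat ->
  fPP d j k (upd y i s) = fPP d j k y + cc d i j k * (s - y i) + 0 * (s - y i)^2 + 0 * (s - y i)^3.
Proof.
  intro Hi. unfold fPP, cc.
  destruct i as [|[|[|i]]]; try lia; ex3; ring.
Qed.

Lemma pd_cubic d i : (i < 3)%nat -> pd i (cubic d) = fP d i.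
Proof.
  intro Hi. apply functional_extensionality; intro y. apply pd_spec.
  eapply dl_cubic. intro s. apply cubic_line; auto.
Qed.

Lemma pd_fP d i j : (i < 3)%nat -> pd i (fP d j) = fPP d i j.
Proof.
  intro Hi. apply functional_extensionality; intro y. apply pd_spec.
  eapply dl_cubic. intro s. apply fP_line; auto.
Qed.

Lemma pd_fPP d i j k : (i < 3)%nat -> pd i (fPP d j k) = fun _ => cc d i j k.
Proof.
  intro Hi. apply functional_extensionality; intro y. apply pd_spec.
  eapply dl_cubic. intro s. apply fPP_line; auto.
Qed.

Definition Mext (M M' : nat -> nat -> R) := forall p q, (p < 3)%nat -> (q < 3)%nat -> M p q = M' p q.

Ltac m3 H := repeat (rewrite H by lia).

Lemma det3_ext M M' : Mext M M' -> det3 M = det3 M'.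
Proof. intro H. unfold det3, sum3, cof3; simpl. m3 H. reflexivity. Qed.

Lemma adj3_ext M M' : Mext M M' -> Mext (adj3 M) (adj3 M').
Proof. intros H p q Hp Hq. unfold adj3, cof3.
  destruct p as [|[|[|p]]]; try lia; destruct q as [|[|[|q]]]; try lia; simpl; m3 H; reflexivity. Qed.

Lemma tr3_ext M M' : Mext M M' -> tr3 M = tr3 M'.
Proof. intro H. unfold tr3, sum3; simpl. m3 H. reflexivity. Qed.

Lemma mul3_ext M M' N N' : Mext M M' -> Mext N N' -> Mext (mul3 M N) (mul3 M' N').
Proof. intros H1 H2 p q Hp Hq. unfold mul3, sum3. m3 H1. m3 H2. reflexivity. Qed.

Definition msc (t : R) (Y : nat -> nat -> R) : nat -> nat -> R := fun a b => t * Y a b.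

Lemma det3_lin X Y t :
  det3 (madd X (msc t Y)) = det3 X + tr3 (mul3 (adj3 X) Y) * t
     + tr3 (mul3 X (adj3 Y)) * t^2 + det3 Y * t^3.
Proof. unfold det3, tr3, mul3, adj3, cof3, madd, msc, sum3; simpl. ring. Qed.

Lemma tradj_lin X Y Z t :
  tr3 (mul3 (adj3 (madd X (msc t Y))) Z) = tr3 (mul3 (adj3 X) Z)
     + tr3 (mul3 (mixadj X Y) Z) * t + tr3 (mul3 (adj3 Y) Z) * t^2 + 0 * t^3.
Proof. unfold det3, tr3, mul3, mixadj, adj3, cof3, madd, msc, sum3; simpl. ring. Qed.

Lemma Am_line d y i s : (i < 3)%nat -> Mext (Am d (upd y i s)) (madd (Am d y) (msc (s - y i) (Cm d i))).
Proof. intros Hi p q _ _. unfold Am, madd, msc, Cm. rewrite fPP_line by auto. ring. Qed.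

Lemma Hp_line d y i s : (i < 3)%nat ->
  Hp d (upd y i s) = Hp d y + HP d i y * (s - y i) + tr3 (mul3 (Am d y) (adj3 (Cm d i))) * (s - y i)^2
     + det3 (Cm d i) * (s - y i)^3.
Proof. intro Hi. unfold Hp. rewrite (det3_ext _ _ (Am_line d y i s Hi)). rewrite det3_lin. unfold HP. ring. Qed.

Lemma HP_line d j y i s : (i < 3)%nat ->
  HP d j (upd y i s) = HP d j y + HPP d i j y * (s - y i) + tr3 (mul3 (adj3 (Cm d i)) (Cm d j)) * (s - y i)^2
     + 0 * (s - y i)^3.
Proof. intro Hi. unfold HP.
  rewrite (tr3_ext _ _ (mul3_ext _ _ _ _ (adj3_ext _ _ (Am_line d y i s Hi)) (fun p q _ _ => eq_refl))).
  rewrite tradj_lin. unfold HPP. ring. Qed.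

Lemma dl_Hp d y i : (i < 3)%nat -> derivable_pt_lim (fun s => Hp d (upd y i s)) (y i) (HP d i y).
Proof. intro Hi. eapply dl_cubic. intro s. apply Hp_line; auto. Qed.
Lemma dl_HP d j y i : (i < 3)%nat -> derivable_pt_lim (fun s => HP d j (upd y i s)) (y i) (HPP d i j y).
Proof. intro Hi. eapply dl_cubic. intro s. apply HP_line; auto. Qed.
Lemma dl_f d y i : (i < 3)%nat -> derivable_pt_lim (fun s => cubic d (upd y i s)) (y i) (fP d i y).
Proof. intro Hi. eapply dl_cubic. intro s. apply cubic_line; auto. Qed.
Lemma dl_fP d j y i : (i < 3)%nat -> derivable_pt_lim (fun s => fP d j (upd y i s)) (y i) (fPP d i j y).
Proof. intro Hi. eapply dl_cubic. intro s. apply fP_line; auto. Qed.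

Definition symm (A : nat -> nat -> R) := A 1%nat 0%nat = A 0%nat 1%nat /\ A 2%nat 0%nat = A 0%nat 2%nat /\ A 2%nat 1%nat = A 1%nat 2%nat.
Definition eva (A : nat -> nat -> R) (y : vec) (i : nat) := / 2 * sum3 (fun j => A i j * y j).
Definition evf (A : nat -> nat -> R) (y : vec) := / 6 * sum3 (fun i => sum3 (fun j => A i j * y i * y j)).
Definition Gof (A : nat -> nat -> R) (y : vec) := fun i j => eva A y i * eva A y j - evf A y * A i j.

Lemma detG_alg A y : symm A -> det3 (Gof A y) = evf A y ^ 3 * det3 A / 2.
Proof. intros [h1 [h2 h3]]. unfold Gof, eva, evf, det3, cof3, sum3; simpl. rewrite h1, h2, h3. field. Qed.

Lemma adjG_alg A y i j : symm A -> (i < 3)%nat -> (j < 3)%nat ->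
  adj3 (Gof A y) i j = evf A y * (det3 A * y i * y j / 4 - evf A y / 2 * adj3 A i j).
Proof. intros [h1 [h2 h3]] Hi Hj. unfold Gof, eva, evf, det3, adj3, cof3, sum3.
  destruct i as [|[|[|i]]]; try lia; destruct j as [|[|[|j]]]; try lia; simpl; rewrite ?h1, ?h2, ?h3; field. Qed.

Lemma det3_sc c M : det3 (msc c M) = c^3 * det3 M.
Proof. unfold det3, cof3, msc, sum3; simpl; ring. Qed.
Lemma adj3_sc c M i j : adj3 (msc c M) i j = c^2 * adj3 M i j.
Proof. unfold adj3, cof3, msc; ring. Qed.

Lemma fPP_sym d i j y : fPP d i j y = fPP d j i y.
Proof. unfold fPP, cc, sum3; ring. Qed.
Lemma Am_symm d y : symm (Am d y).
Proof. unfold symm, Am. repeat split; apply fPP_sym. Qed.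
Lemma euler_fP d i y : fP d i y = eva (Am d y) y i.
Proof. unfold fP, eva, Am, fPP, sum3; cbv beta; field. Qed.
Lemma euler_f d y : cubic d y = evf (Am d y) y.
Proof. unfold cubic, evf, Am, fPP, cc, sum3; cbv beta; field. Qed.

Definition Gx d (y : vec) : nat -> nat -> R := fun i j => fP d i y * fP d j y - cubic d y * fPP d i j y.

Lemma Gx_eq d y : Gx d y = Gof (Am d y) y.
Proof. apply functional_extensionality; intro i; apply functional_extensionality; intro j.
  unfold Gx, Gof. rewrite !euler_fP, euler_f. reflexivity. Qed.

Lemma detGx d y : det3 (Gx d y) = cubic d y ^ 3 * Hp d y / 2.
Proof. rewrite Gx_eq, detG_alg by apply Am_symm. rewrite euler_f. reflexivity. Qed.

Lemma adjGx d y i j : (i < 3)%nat -> (j < 3)%nat ->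
  adj3 (Gx d y) i j = cubic d y * (Hp d y * y i * y j / 4 - cubic d y / 2 * adj3 (Am d y) i j).
Proof. intros. rewrite Gx_eq, adjG_alg by (auto; apply Am_symm). rewrite euler_f. reflexivity. Qed.

Lemma Gx_sym d y i j : Gx d y i j = Gx d y j i.
Proof. unfold Gx. rewrite fPP_sym. ring. Qed.

Lemma dl_eq g x l l' : l = l' -> derivable_pt_lim g x l -> derivable_pt_lim g x l'.
Proof. intros ->; auto. Qed.

Lemma dl_ln g x l : derivable_pt_lim g x l -> 0 < g x -> derivable_pt_lim (fun s => ln (g s)) x (l / g x).
Proof. intros H Hp. pose proof (derivable_pt_lim_comp g ln x l (/ g x) H (derivable_pt_lim_ln _ Hp)) as H2.
  unfold comp in H2. eapply dl_eq; [|exact H2]. field. lra. Qed.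

Lemma dl_div g h x l1 l2 : derivable_pt_lim g x l1 -> derivable_pt_lim h x l2 -> h x <> 0 ->
  derivable_pt_lim (fun s => g s / h s) x ((l1 * h x - l2 * g x) / (h x)^2).
Proof. intros H1 H2 H3. pose proof (derivable_pt_lim_div g h x l1 l2 H1 H2 H3) as H.
  eapply dl_eq; [|exact H]. unfold Rsqr. field. auto. Qed.

Lemma dl_opp g x l : derivable_pt_lim g x l -> derivable_pt_lim (fun s => - g s) x (- l).
Proof. intro H. exact (derivable_pt_lim_opp g x l H). Qed.

Lemma dl_minus g h x l1 l2 : derivable_pt_lim g x l1 -> derivable_pt_lim h x l2 ->
  derivable_pt_lim (fun s => g s - h s) x (l1 - l2).
Proof. intros H1 H2. exact (derivable_pt_lim_minus g h x l1 l2 H1 H2). Qed.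

Lemma dl_scal c g x l : derivable_pt_lim g x l -> derivable_pt_lim (fun s => c * g s) x (c * l).
Proof. intro H. exact (derivable_pt_lim_scal g c x l H). Qed.

Lemma dl_pow3 g x l : derivable_pt_lim g x l -> derivable_pt_lim (fun s => g s ^ 3) x (3 * g x ^ 2 * l).
Proof. intro H. pose proof (derivable_pt_lim_comp g (fun u => u ^ 3) x l _ H (derivable_pt_lim_pow (g x) 3)) as H2.
  unfold comp in H2. eapply dl_eq; [|exact H2]. simpl. ring. Qed.

Definition U1 d : vec -> Prop := fun z => cubic d z > 0.
Definition U2 d : vec -> Prop := fun z => cubic d z > 0 /\ Hp d z > 0.

Lemma LO_U1 d : LO (U1 d).
Proof. apply LO_pos. intros y i Hi. eapply dl_cont. apply dl_f; auto. Qed.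
Lemma LO_U2 d : LO (U2 d).
Proof. apply LO_and; apply LO_pos; intros y i Hi; eapply dl_cont; [apply dl_f|apply dl_Hp]; auto. Qed.

Lemma pd_pot d z j : (j < 3)%nat -> cubic d z > 0 ->
  pd j (potential (cubic d)) z = - (fP d j z / cubic d z).
Proof. intros Hj Hz. apply pd_spec. unfold potential.
  apply dl_opp. eapply dl_eq; [|apply dl_ln; [apply dl_f; auto|]].
  - cbv beta; rewrite upd_same; reflexivity.
  - cbv beta; rewrite upd_same; auto. Qed.

Lemma gmet_eq d z i j : (i < 3)%nat -> (j < 3)%nat -> cubic d z > 0 ->
  gmet (cubic d) z i j = / (4 * cubic d z ^ 2) * Gx d z i j.
Proof. intros Hi Hj Hz. unfold gmet.
  rewrite (pd_loc (U1 d) _ (fun z => - (fP d j z / cubic d z)) i z (Gx d z i j / cubic d z ^ 2)); auto.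
  - field. lra.
  - apply LO_U1.
  - intros w Hw. apply pd_pot; auto.
  - eapply dl_eq; [|apply dl_opp; apply dl_div; [apply dl_fP; auto|apply dl_f; auto|]].
    + cbv beta; rewrite !upd_same. unfold Gx. field. lra.
    + cbv beta; rewrite upd_same; lra.
Qed.

Definition mgmet d z := msc (/ (4 * cubic d z ^ 2)) (Gx d z).

Lemma gmet_ext d z : cubic d z > 0 -> Mext (gmet (cubic d) z) (mgmet d z).
Proof. intros Hz p q Hp Hq. rewrite gmet_eq; auto. Qed.

Lemma detg_eq d z : cubic d z > 0 -> det3 (gmet (cubic d) z) = Hp d z / (128 * cubic d z ^ 3).
Proof. intro Hz. rewrite (det3_ext _ _ (gmet_ext d z Hz)). unfold mgmet. rewrite det3_sc, detGx.
  field. lra. Qed.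

Lemma logdetg_eq d z : cubic d z > 0 -> logdetg (cubic d) z = ln (Hp d z / (128 * cubic d z ^ 3)).
Proof. intro Hz. unfold logdetg. rewrite detg_eq; auto. Qed.

Definition LD d (j : nat) (z : vec) : R := HP d j z / Hp d z - 3 * (fP d j z / cubic d z).

Lemma pd_logdetg d z j : (j < 3)%nat -> U2 d z -> pd j (logdetg (cubic d)) z = LD d j z.
Proof. intros Hj [Hf Hh].
  apply (pd_loc (U1 d) _ (fun z => ln (Hp d z / (128 * cubic d z ^ 3)))); auto.
  - apply LO_U1.
  - intros w Hw. apply logdetg_eq; auto.
  - eapply dl_eq; [|apply dl_ln; [apply dl_div; [apply dl_Hp; auto| apply dl_scal; apply dl_pow3; apply dl_f; auto|]|]].
    + cbv beta; rewrite !upd_same. unfold LD. field. lra.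
    + cbv beta; rewrite upd_same. apply Rgt_not_eq. apply Rmult_lt_0_compat; [lra| apply pow_lt; auto].
    + cbv beta; rewrite upd_same. apply Rdiv_lt_0_compat; auto. apply Rmult_lt_0_compat; [lra| apply pow_lt; auto].
Qed.

Lemma pd2_logdetg d y i j : (i < 3)%nat -> (j < 3)%nat -> U2 d y ->
  pd i (pd j (logdetg (cubic d))) y =
  (HPP d i j y * Hp d y - HP d i y * HP d j y) / Hp d y ^ 2 + 3 * (Gx d y i j / cubic d y ^ 2).
Proof. intros Hi Hj [Hf Hh].
  apply (pd_loc (U2 d) _ (LD d j)); auto.
  - apply LO_U2.
  - split; auto.
  - intros w Hw. apply pd_logdetg; auto.
  - unfold LD. eapply dl_eq; [|apply dl_minus; [apply dl_div; [apply dl_HP; auto|apply dl_Hp; auto|]|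
       apply dl_scal; apply dl_div; [apply dl_fP; auto|apply dl_f; auto|]]].
    + cbv beta; rewrite !upd_same. unfold Gx. field. lra.
    + cbv beta; rewrite upd_same; lra.
    + cbv beta; rewrite upd_same; lra.
Qed.

Definition Bx d y := adj3 (Gx d y).
Definition Qv d y := sum3 (fun i => sum3 (fun j => Bx d y i j * HP d i y * HP d j y)).
Definition Pv d y := - sum3 (fun i => sum3 (fun j => Bx d y i j * HPP d i j y)).

Lemma summand_eq d y i j : (i < 3)%nat -> (j < 3)%nat -> U2 d y ->
  adj3 (gmet (cubic d) y) i j / det3 (gmet (cubic d) y) * (- / 4 * pd i (pd j (logdetg (cubic d))) y)
  = Bx d y i j * (8 / (cubic d y * Hp d y)) * (- / 4 *
      ((HPP d i j y * Hp d y - HP d i y * HP d j y) / Hp d y ^ 2 + 3 * (Gx d y i j / cubic d y ^ 2))).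
Proof. intros Hi Hj [Hf Hh].
  rewrite (adj3_ext _ _ (gmet_ext d y Hf)) by auto. unfold mgmet. rewrite adj3_sc.
  rewrite detg_eq by auto. rewrite pd2_logdetg by (auto; split; auto). unfold Bx. field. split; lra. Qed.

Lemma SBG d y : sum3 (fun i => sum3 (fun j => Bx d y i j * Gx d y i j)) = 3 * det3 (Gx d y).
Proof. unfold Bx, adj3, det3, cof3, sum3; simpl.
  rewrite (Gx_sym d y 1 0), (Gx_sym d y 2 0), (Gx_sym d y 2 1). ring. Qed.

Lemma scal_eq d y : U2 d y ->
  scal (cubic d) y = -9 + 2 * (Qv d y + Hp d y * Pv d y) / (cubic d y * Hp d y ^ 3).
Proof. intros HU. pose proof HU as [Hf Hh]. unfold scal. unfold sum3.
  rewrite !summand_eq by (auto; lia).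
  pose proof (SBG d y) as HS. rewrite detGx in HS. unfold sum3 in HS.
  unfold Qv, Pv, sum3.
  set (f := cubic d y) in *. set (H := Hp d y) in *.
  transitivity (- (2 / (f * H)) * ((H * (Bx d y 0 0 * HPP d 0 0 y + Bx d y 0 1 * HPP d 0 1 y + Bx d y 0 2 * HPP d 0 2 y +
     (Bx d y 1 0 * HPP d 1 0 y + Bx d y 1 1 * HPP d 1 1 y + Bx d y 1 2 * HPP d 1 2 y) +
     (Bx d y 2 0 * HPP d 2 0 y + Bx d y 2 1 * HPP d 2 1 y + Bx d y 2 2 * HPP d 2 2 y))
   - (Bx d y 0 0 * HP d 0 y * HP d 0 y + Bx d y 0 1 * HP d 0 y * HP d 1 y + Bx d y 0 2 * HP d 0 y * HP d 2 y +
    (Bx d y 1 0 * HP d 1 y * HP d 0 y + Bx d y 1 1 * HP d 1 y * HP d 1 y + Bx d y 1 2 * HP d 1 y * HP d 2 y) +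
    (Bx d y 2 0 * HP d 2 y * HP d 0 y + Bx d y 2 1 * HP d 2 y * HP d 1 y + Bx d y 2 2 * HP d 2 y * HP d 2 y))) / H ^ 2)
   - 6 / (f ^ 3 * H) * (Bx d y 0 0 * Gx d y 0 0 + Bx d y 0 1 * Gx d y 0 1 + Bx d y 0 2 * Gx d y 0 2 +
      (Bx d y 1 0 * Gx d y 1 0 + Bx d y 1 1 * Gx d y 1 1 + Bx d y 1 2 * Gx d y 1 2) +
      (Bx d y 2 0 * Gx d y 2 0 + Bx d y 2 1 * Gx d y 2 1 + Bx d y 2 2 * Gx d y 2 2))).
  - field. split; lra.
  - rewrite HS. field. split; lra.
Qed.

Definition qf (M : nat -> nat -> R) (v : vec) := sum3 (fun i => sum3 (fun j => M i j * v i * v j)).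
Definition mkv (a b c : R) : vec := fun k => match k with 0%nat => a | 1%nat => b | _ => c end.

Lemma PD3 M : symm M -> (forall v, nonzero3 v -> qf M v > 0) ->
  det3 M > 0 /\ forall x, qf (adj3 M) x >= 0.
Proof.
  intros [h1 [h2 h3]] HP.
  assert (H0 : M 0%nat 0%nat > 0).
  { specialize (HP (mkv 1 0 0)). unfold qf, sum3, mkv in HP; simpl in HP.
    assert (nonzero3 (mkv 1 0 0)) by (left; simpl; lra). specialize (HP H). lra. }
  assert (Hm : M 0%nat 0%nat * M 1%nat 1%nat - M 0%nat 1%nat * M 0%nat 1%nat > 0).
  { specialize (HP (mkv (- M 0%nat 1%nat) (M 0%nat 0%nat) 0)).
    assert (nonzero3 (mkv (- M 0%nat 1%nat) (M 0%nat 0%nat) 0)) by (right; left; simpl; lra).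
    specialize (HP H). unfold qf, sum3, mkv in HP; simpl in HP. rewrite h1 in HP.
    assert (E : M 0%nat 0%nat * (M 0%nat 0%nat * M 1%nat 1%nat - M 0%nat 1%nat * M 0%nat 1%nat) > 0) by nra.
    apply Rmult_gt_reg_l with (M 0%nat 0%nat); lra. }
  assert (Hd : det3 M > 0).
  { set (v := mkv (adj3 M 0 2) (adj3 M 1 2) (adj3 M 2 2)).
    assert (Hv : nonzero3 v).
    { right; right. unfold v, mkv, adj3, cof3; simpl. rewrite h1. lra. }
    specialize (HP v Hv). unfold v, qf, sum3, mkv, adj3, cof3 in HP; simpl in HP.
    assert (E : det3 M * (M 0%nat 0%nat * M 1%nat 1%nat - M 0%nat 1%nat * M 0%nat 1%nat) > 0).
    { unfold det3, cof3, sum3; simpl. rewrite h1, h2, h3 in *. nra. }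
    apply Rmult_gt_reg_r with (M 0%nat 0%nat * M 1%nat 1%nat - M 0%nat 1%nat * M 0%nat 1%nat); lra. }
  split; auto.
  intro x.
  set (v := mkv (sum3 (fun j => adj3 M 0 j * x j)) (sum3 (fun j => adj3 M 1 j * x j)) (sum3 (fun j => adj3 M 2 j * x j))).
  assert (Id : qf M v = det3 M * qf (adj3 M) x).
  { unfold v, qf, mkv, adj3, det3, cof3, sum3; simpl. rewrite h1, h2, h3. ring. }
  assert (Id2 : qf (adj3 M) x = x 0%nat * v 0%nat + x 1%nat * v 1%nat + x 2%nat * v 2%nat).
  { unfold v, qf, mkv, adj3, cof3, sum3; simpl. rewrite h1, h2, h3. ring. }
  destruct (Req_dec (v 0%nat) 0) as [e0|e0]; [destruct (Req_dec (v 1%nat) 0) as [e1|e1];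
     [destruct (Req_dec (v 2%nat) 0) as [e2|e2]|]|].
  - rewrite Id2, e0, e1, e2. lra.
  - assert (qf M v > 0) by (apply HP; right; right; auto).
    rewrite Id in H. assert (qf (adj3 M) x > 0) by (apply Rmult_gt_reg_l with (det3 M); lra). lra.
  - assert (qf M v > 0) by (apply HP; right; left; auto).
    rewrite Id in H. assert (qf (adj3 M) x > 0) by (apply Rmult_gt_reg_l with (det3 M); lra). lra.
  - assert (qf M v > 0) by (apply HP; left; auto).
    rewrite Id in H. assert (qf (adj3 M) x > 0) by (apply Rmult_gt_reg_l with (det3 M); lra). lra.
Qed.

Lemma Gx_symm d y : symm (Gx d y).
Proof. unfold symm. repeat split; apply Gx_sym. Qed.

Lemma K_facts d K y : kahler_cone_like (cubic d) K -> K y ->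
  cubic d y > 0 /\ Hp d y > 0 /\ forall x, qf (Bx d y) x >= 0.
Proof.
  intros [_ [_ [_ [Hf Hg]]]] Hy.
  assert (Hfy : cubic d y > 0) by auto.
  assert (HPDG : forall v, nonzero3 v -> qf (Gx d y) v > 0).
  { intros v Hv. specialize (Hg y v Hy Hv).
    assert (E : sum3 (fun i => sum3 (fun j => gmet (cubic d) y i j * v i * v j)) =
                / (4 * cubic d y ^ 2) * qf (Gx d y) v).
    { unfold qf, sum3. rewrite !gmet_eq by (auto; lia). ring. }
    rewrite E in Hg.
    assert (/ (4 * cubic d y ^ 2) > 0) by (apply Rinv_0_lt_compat; apply Rmult_lt_0_compat; [lra|apply pow_lt; auto]).
    apply Rmult_gt_reg_l with (/ (4 * cubic d y ^ 2)); lra. }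
  destruct (PD3 _ (Gx_symm d y) HPDG) as [Hdet Hadj].
  rewrite detGx in Hdet.
  split; auto. split; auto.
  assert (cubic d y ^ 3 > 0) by (apply pow_lt; auto).
  apply Rmult_gt_reg_l with (cubic d y ^ 3 / 2). apply Rdiv_lt_0_compat; lra. lra.
Qed.

Definition yl (y0 z : vec) (t : R) : vec := fun k => y0 k + t * (z k - y0 k).

Lemma close_scale a b t e : 0 <= t <= 1 -> Rabs (a - b) < e -> Rabs (b + t * (a - b) - b) < e.
Proof. intros Ht H. replace (b + t * (a - b) - b) with (t * (a - b)) by ring.
  rewrite Rabs_mult. rewrite (Rabs_right t) by lra.
  assert (t * Rabs (a - b) <= 1 * Rabs (a - b)) by (apply Rmult_le_compat_r; [apply Rabs_pos|lra]). lra. Qed.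

Lemma seg f K y0 z t : kahler_cone_like f K ->
  (forall eps, eps > 0 -> exists k, K k /\ close k y0 eps) -> K z -> 0 < t <= 1 -> K (yl y0 z t).
Proof.
  intros [Hop [Hcv _]] Hb Hz Ht.
  destruct (Req_dec t 1) as [E|E].
  - replace (yl y0 z t) with z; auto. apply functional_extensionality; intro k. unfold yl. subst. ring.
  - destruct (Hop z Hz) as [e [He Hball]].
    set (dl := e * t / (1 - t)).
    assert (Hdl : dl > 0) by (unfold dl; apply Rdiv_lt_0_compat; [apply Rmult_lt_0_compat|]; lra).
    destruct (Hb dl Hdl) as [k [Hk Hck]].
    set (c := (1 - t) / t).
    assert (Hc : c > 0) by (unfold c; apply Rdiv_lt_0_compat; lra).
    set (z' := fun m => z m + c * (y0 m - k m)).
    assert (Hz' : K z').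
    { apply Hball. unfold close, z'.
      assert (Hgen : forall m, Rabs (k m - y0 m) < dl -> Rabs (z m + c * (y0 m - k m) - z m) < e).
      { intros m Hm. replace (z m + c * (y0 m - k m) - z m) with (c * (y0 m - k m)) by ring.
        rewrite Rabs_mult, Rabs_right by lra. rewrite <- Rabs_Ropp. replace (- (y0 m - k m)) with (k m - y0 m) by ring.
        assert (c * Rabs (k m - y0 m) < c * dl) by (apply Rmult_lt_compat_l; auto).
        replace (c * dl) with e in H by (unfold c, dl; field; lra). lra. }
      destruct Hck as [h0 [h1 h2]]. repeat split; apply Hgen; auto. }
    pose proof (Hcv z' k t Hz' Hk ltac:(lra)) as HK.
    replace (yl y0 z t) with (fun m => t * z' m + (1 - t) * k m); auto.
    apply functional_extensionality; intro m. unfold yl, z', c. field. lra.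
Qed.

Lemma yl_close y0 z t eps : 0 <= t <= 1 -> close z y0 eps -> close (yl y0 z t) y0 eps.
Proof. intros Ht [h0 [h1 h2]]. unfold close, yl. repeat split; apply close_scale; auto. Qed.

Lemma yl0 y0 z : yl y0 z 0 = y0.
Proof. apply functional_extensionality; intro k. unfold yl. ring. Qed.

Definition CV (F : vec -> R) := forall y0 z, continuity (fun t => F (yl y0 z t)).
Definition CVM (M : vec -> nat -> nat -> R) := forall p q, CV (fun y => M y p q).

Lemma CV_const c : CV (fun _ => c).
Proof. intros y0 z. apply continuity_const. intros a b; reflexivity. Qed.
Lemma CV_coord k : CV (fun y => y k).
Proof. intros y0 z. unfold yl.
  apply (continuity_plus (fun _ => y0 k) (fun t => t * (z k - y0 k))).
  apply continuity_const; intros a b; reflexivity.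
  apply (continuity_mult (fun t => t) (fun _ => z k - y0 k)). apply derivable_continuous, derivable_id.
  apply continuity_const; intros a b; reflexivity. Qed.
Lemma CV_plus F G : CV F -> CV G -> CV (fun y => F y + G y).
Proof. intros H1 H2 y0 z. apply (continuity_plus (fun t => F (yl y0 z t)) (fun t => G (yl y0 z t))); auto. Qed.
Lemma CV_minus F G : CV F -> CV G -> CV (fun y => F y - G y).
Proof. intros H1 H2 y0 z. apply (continuity_minus (fun t => F (yl y0 z t)) (fun t => G (yl y0 z t))); auto. Qed.
Lemma CV_mult F G : CV F -> CV G -> CV (fun y => F y * G y).
Proof. intros H1 H2 y0 z. apply (continuity_mult (fun t => F (yl y0 z t)) (fun t => G (yl y0 z t))); auto. Qed.
Lemma CV_opp F : CV F -> CV (fun y => - F y).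
Proof. intros H1 y0 z. apply (continuity_opp (fun t => F (yl y0 z t))); auto. Qed.
Lemma CV_sum3 (F : nat -> vec -> R) : (forall i, CV (F i)) -> CV (fun y => sum3 (fun i => F i y)).
Proof. intros H. unfold sum3. apply CV_plus; [apply CV_plus|]; apply H. Qed.

Lemma CV_det3 M : CVM M -> CV (fun y => det3 (M y)).
Proof. intros H. unfold det3, cof3, sum3; simpl.
  repeat (apply CV_plus || apply CV_minus || apply CV_mult || apply CV_opp); apply H. Qed.
Lemma CV_tr3 M : CVM M -> CV (fun y => tr3 (M y)).
Proof. intros H. unfold tr3, sum3. repeat apply CV_plus; apply H. Qed.
Lemma CVM_adj3 M : CVM M -> CVM (fun y => adj3 (M y)).
Proof. intros H p q. unfold adj3, cof3. apply CV_minus; apply CV_mult; apply H. Qed.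
Lemma CVM_mul3 M N : CVM M -> CVM N -> CVM (fun y => mul3 (M y) (N y)).
Proof. intros H1 H2 p q. unfold mul3. apply CV_sum3. intro j. apply CV_mult; [apply H1|apply H2]. Qed.
Lemma CVM_madd M N : CVM M -> CVM N -> CVM (fun y => madd (M y) (N y)).
Proof. intros H1 H2 p q. unfold madd. apply CV_plus; [apply H1|apply H2]. Qed.
Lemma CVM_const (N : nat -> nat -> R) : CVM (fun _ => N).
Proof. intros p q. apply CV_const. Qed.
Lemma CVM_mixadj M N : CVM M -> CVM N -> CVM (fun y => mixadj (M y) (N y)).
Proof. intros H1 H2 p q. unfold mixadj.
  apply CV_minus; [apply CV_minus|].
  - apply (CVM_adj3 (fun y => madd (M y) (N y))). apply CVM_madd; auto.
  - apply (CVM_adj3 M); auto.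
  - apply (CVM_adj3 N); auto. Qed.

Lemma CV_fPP d i j : CV (fPP d i j).
Proof. unfold fPP. apply CV_sum3. intro r. apply CV_mult. apply CV_const. apply CV_coord. Qed.
Lemma CV_fP d i : CV (fP d i).
Proof. unfold fP. apply CV_mult. apply CV_const. apply CV_sum3. intro q. apply CV_sum3. intro r.
  apply CV_mult; [apply CV_mult|]; [apply CV_const|apply CV_coord|apply CV_coord]. Qed.
Lemma CV_cubic d : CV (cubic d).
Proof. unfold cubic. apply CV_sum3; intro i. apply CV_sum3; intro j. apply CV_sum3; intro k.
  repeat apply CV_mult; (apply CV_const || apply CV_coord). Qed.
Lemma CVM_Am d : CVM (Am d).
Proof. intros p q. unfold Am. apply CV_fPP. Qed.
Lemma CV_Hp d : CV (Hp d).
Proof. unfold Hp. apply (CV_det3 (Am d)). apply CVM_Am. Qed.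
Lemma CV_HP d i : CV (HP d i).
Proof. unfold HP. apply (CV_tr3 (fun y => mul3 (adj3 (Am d y)) (Cm d i))).
  apply (CVM_mul3 (fun y => adj3 (Am d y)) (fun _ => Cm d i)). apply CVM_adj3, CVM_Am. apply CVM_const. Qed.
Lemma CV_HPP d i j : CV (HPP d i j).
Proof. unfold HPP. apply (CV_tr3 (fun y => mul3 (mixadj (Am d y) (Cm d i)) (Cm d j))).
  apply (CVM_mul3 (fun y => mixadj (Am d y) (Cm d i)) (fun _ => Cm d j)).
  apply (CVM_mixadj (Am d) (fun _ => Cm d i)). apply CVM_Am. apply CVM_const. apply CVM_const. Qed.
Lemma CVM_Gx d : CVM (Gx d).
Proof. intros p q. unfold Gx. apply CV_minus; apply CV_mult; (apply CV_fP || apply CV_cubic || apply CV_fPP). Qed.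
Lemma CVM_Bx d : CVM (Bx d).
Proof. unfold Bx. apply (CVM_adj3 (Gx d)). apply CVM_Gx. Qed.
Lemma CV_Qv d : CV (Qv d).
Proof. unfold Qv. apply CV_sum3; intro i. apply CV_sum3; intro j.
  apply CV_mult; [apply CV_mult|]; [apply CVM_Bx|apply CV_HP|apply CV_HP]. Qed.
Lemma CV_Pv d : CV (Pv d).
Proof. unfold Pv. apply CV_opp. apply CV_sum3; intro i. apply CV_sum3; intro j.
  apply CV_mult; [apply CVM_Bx|apply CV_HPP]. Qed.
Lemma CV_qfB d x : CV (fun y => qf (Bx d y) x).
Proof. unfold qf. apply CV_sum3; intro i. apply CV_sum3; intro j.
  apply CV_mult; [apply CV_mult|]; [apply CVM_Bx|apply CV_const|apply CV_const]. Qed.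

Lemma cont0 g eps : continuity_pt g 0 -> eps > 0 -> exists a, a > 0 /\ forall t, 0 < t < a -> Rabs (g t - g 0) < eps.
Proof. intros Hc He. destruct (Hc eps He) as [a [Ha H]]. exists a. split; auto.
  intros t Ht. apply (H t). split. split. exact I. lra. simpl. unfold R_dist. rewrite Rminus_0_r, Rabs_right; lra. Qed.

Lemma fin N f h M Km : f > 0 -> h > 0 -> M + 9 < Km -> 2 * N > Km * (f * h ^ 3) -> -9 + 2 * N / (f * h ^ 3) > M.
Proof. intros Hf Hh HK HN. assert (Hd : f * h ^ 3 > 0) by (apply Rmult_lt_0_compat; auto; apply pow_lt; auto).
  assert (2 * N / (f * h ^ 3) > Km).
  { apply Rmult_gt_reg_r with (f * h ^ 3); auto. unfold Rdiv. rewrite Rmult_assoc, Rinv_l by lra. lra. }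
  lra. Qed.

Lemma pick4 a1 a2 a3 a4 : a1 > 0 -> a2 > 0 -> a3 > 0 -> a4 > 0 ->
  exists t, 0 < t <= 1 /\ t < a1 /\ t < a2 /\ t < a3 /\ t < a4.
Proof. intros. set (m := Rmin (Rmin a1 a2) (Rmin a3 a4)).
  assert (m > 0) by (unfold m; repeat apply Rmin_pos; auto).
  assert (m <= a1 /\ m <= a2 /\ m <= a3 /\ m <= a4).
  { unfold m. repeat split.
    - eapply Rle_trans; apply Rmin_l.
    - eapply Rle_trans; [apply Rmin_l|apply Rmin_r].
    - eapply Rle_trans; [apply Rmin_r|apply Rmin_l].
    - eapply Rle_trans; apply Rmin_r. }
  exists (Rmin 1 (m / 2)). pose proof (Rmin_l 1 (m/2)). pose proof (Rmin_r 1 (m/2)).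
  assert (Rmin 1 (m/2) > 0) by (apply Rmin_pos; lra). repeat split; lra. Qed.

Lemma asym (fF hF qF pF : R -> R) M :
  continuity_pt fF 0 -> continuity_pt hF 0 -> continuity_pt qF 0 -> continuity_pt pF 0 ->
  fF 0 > 0 -> hF 0 = 0 ->
  (forall t, 0 < t <= 1 -> fF t > 0 /\ hF t > 0 /\ qF t >= 0) ->
  qF 0 > 0 \/ pF 0 > 0 ->
  exists t, 0 < t <= 1 /\ -9 + 2 * (qF t + hF t * pF t) / (fF t * hF t ^ 3) > M.
Proof.
  intros Cf Ch Cq Cp Hf0 Hh0 Hpos Hcase.
  set (f0 := fF 0) in *. set (Km := Rabs M + 10).
  assert (HKm : Km > 0) by (unfold Km; pose proof (Rabs_pos M); lra).
  assert (HKM : M + 9 < Km) by (unfold Km; pose proof (Rle_abs M); lra).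
  set (Pi := Rabs (pF 0) + 1).
  assert (HPi : Pi > 0) by (unfold Pi; pose proof (Rabs_pos (pF 0)); lra).
  destruct (cont0 fF f0 Cf Hf0) as [af [Haf Hf]].
  destruct Hcase as [Hq0|Hp0].
  - set (q0 := qF 0) in *.
    set (eh := Rmin 1 (Rmin (q0 / (4 * Pi)) (q0 / (4 * f0 * Km)))).
    assert (Heh : eh > 0).
    { unfold eh. repeat apply Rmin_pos; try lra; apply Rdiv_lt_0_compat; try lra.
      apply Rmult_lt_0_compat; lra. }
    assert (Heh1 : eh <= 1) by apply Rmin_l.
    assert (Heh2 : eh <= q0 / (4 * Pi)) by (eapply Rle_trans; [apply Rmin_r|apply Rmin_l]).
    assert (Heh3 : eh <= q0 / (4 * f0 * Km)) by (eapply Rle_trans; [apply Rmin_r|apply Rmin_r]).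
    destruct (cont0 hF eh Ch Heh) as [ah [Hah Hh]].
    destruct (cont0 qF (q0 / 2) Cq ltac:(lra)) as [aq [Haq Hq]].
    destruct (cont0 pF 1 Cp ltac:(lra)) as [ap [Hap Hp]].
    destruct (pick4 af ah aq ap Haf Hah Haq Hap) as [t [Ht [t1 [t2 [t3 t4]]]]].
    exists t. split; auto.
    destruct (Hpos t Ht) as [Pf [Ph Pq]].
    specialize (Hf t ltac:(lra)). specialize (Hh t ltac:(lra)). specialize (Hq t ltac:(lra)). specialize (Hp t ltac:(lra)).
    rewrite Hh0, Rminus_0_r, Rabs_right in Hh by lra.
    change (fF 0) with f0 in Hf. change (qF 0) with q0 in Hq.
    apply Rabs_def2 in Hf. apply Rabs_def2 in Hq. apply Rabs_def2 in Hp.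
    assert (Hpl : pF t > - Pi) by (unfold Pi; pose proof (Rle_abs (- pF 0)); rewrite Rabs_Ropp in *; lra).
    set (h := hF t) in *. set (p := pF t) in *. set (q := qF t) in *. set (f := fF t) in *.
    apply fin with Km; auto.
    assert (E1 : h * Pi < q0 / 4).
    { assert (h * Pi < q0 / (4 * Pi) * Pi) by (apply Rmult_lt_compat_r; lra).
      replace (q0 / (4 * Pi) * Pi) with (q0 / 4) in H by (field; lra). lra. }
    assert (E2a : h * p > h * (- Pi)) by (apply Rmult_lt_compat_l; lra).
    assert (E2 : h * p > - (q0 / 4)) by lra.
    assert (E3 : h ^ 3 <= h).
    { assert (Hh1 : h < 1) by lra. assert (0 < h * h <= 1) by (split; nra). replace (h ^ 3) with (h * (h * h)) by ring.
      assert (h * (h * h) <= h * 1) by (apply Rmult_le_compat_l; lra). lra. }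
    assert (E4 : f * h ^ 3 < 2 * f0 * h).
    { assert (h ^ 3 > 0) by (apply pow_lt; lra).
      assert (f * h ^ 3 < 2 * f0 * h ^ 3) by (apply Rmult_lt_compat_r; lra).
      assert (2 * f0 * h ^ 3 <= 2 * f0 * h) by (apply Rmult_le_compat_l; lra). lra. }
    assert (E5 : Km * (2 * f0 * h) < q0 / 2).
    { assert (Km * (2 * f0 * h) < Km * (2 * f0 * (q0 / (4 * f0 * Km)))).
      { apply Rmult_lt_compat_l; auto. apply Rmult_lt_compat_l; lra. }
      replace (Km * (2 * f0 * (q0 / (4 * f0 * Km)))) with (q0 / 2) in H by (field; lra). lra. }
    assert (Km * (f * h ^ 3) < Km * (2 * f0 * h)) by (apply Rmult_lt_compat_l; auto).
    lra.
  - set (p0 := pF 0) in *.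
    set (eh := Rmin 1 (p0 / (2 * f0 * Km))).
    assert (Heh : eh > 0).
    { unfold eh. repeat apply Rmin_pos; try lra; apply Rdiv_lt_0_compat; try lra.
      apply Rmult_lt_0_compat; lra. }
    assert (Heh1 : eh <= 1) by apply Rmin_l.
    assert (Heh3 : eh <= p0 / (2 * f0 * Km)) by apply Rmin_r.
    destruct (cont0 hF eh Ch Heh) as [ah [Hah Hh]].
    destruct (cont0 pF (p0 / 2) Cp ltac:(lra)) as [ap [Hap Hp]].
    destruct (pick4 af ah ap ap Haf Hah Hap Hap) as [t [Ht [t1 [t2 [t3 t4]]]]].
    exists t. split; auto.
    destruct (Hpos t Ht) as [Pf [Ph Pq]].
    specialize (Hf t ltac:(lra)). specialize (Hh t ltac:(lra)). specialize (Hp t ltac:(lra)).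
    rewrite Hh0, Rminus_0_r, Rabs_right in Hh by lra.
    change (fF 0) with f0 in Hf. change (pF 0) with p0 in Hp.
    apply Rabs_def2 in Hf. apply Rabs_def2 in Hp.
    set (h := hF t) in *. set (p := pF t) in *. set (q := qF t) in *. set (f := fF t) in *.
    apply fin with Km; auto.
    assert (E2 : h * p > h * (p0 / 2)) by (apply Rmult_lt_compat_l; lra).
    assert (E3 : h ^ 3 <= h * h).
    { assert (Hh1 : h < 1) by lra. replace (h ^ 3) with ((h * h) * h) by ring.
      assert (0 < h * h) by nra. assert ((h * h) * h <= (h * h) * 1) by (apply Rmult_le_compat_l; lra). lra. }
    assert (E4 : f * h ^ 3 < 2 * f0 * (h * h)).
    { assert (h ^ 3 > 0) by (apply pow_lt; lra).
      assert (f * h ^ 3 < 2 * f0 * h ^ 3) by (apply Rmult_lt_compat_r; lra).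
      assert (2 * f0 * h ^ 3 <= 2 * f0 * (h * h)) by (apply Rmult_le_compat_l; lra). lra. }
    assert (E5 : Km * (2 * f0 * (h * h)) < h * p0).
    { assert (Km * (2 * f0 * h) < Km * (2 * f0 * (p0 / (2 * f0 * Km)))).
      { apply Rmult_lt_compat_l; auto. apply Rmult_lt_compat_l; lra. }
      replace (Km * (2 * f0 * (p0 / (2 * f0 * Km)))) with p0 in H by (field; lra).
      assert (h * (Km * (2 * f0 * h)) < h * p0) by (apply Rmult_lt_compat_l; lra).
      replace (Km * (2 * f0 * (h * h))) with (h * (Km * (2 * f0 * h))) by ring. lra. }
    assert (Km * (f * h ^ 3) < Km * (2 * f0 * (h * h))) by (apply Rmult_lt_compat_l; auto).
    lra.
Qed.

Definition mv (X : nat -> nat -> R) (w : vec) : vec := fun k => sum3 (fun l => X k l * w l).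
Definition dot (a b : vec) : R := sum3 (fun k => a k * b k).
Definition crs (a b : vec) : vec := fun k =>
  match k with 0%nat => a 1%nat * b 2%nat - a 2%nat * b 1%nat
  | 1%nat => a 2%nat * b 0%nat - a 0%nat * b 2%nat
  | _ => a 0%nat * b 1%nat - a 1%nat * b 0%nat end.
Definition qf2 (X : nat -> nat -> R) (v : vec) := sum3 (fun i => sum3 (fun j => X i j * v i * v j)).

Lemma I4 (x00 x01 x02 x11 x12 x22 y0 y1 y2 w0 w1 w2 : R) :
  (x00*w0+x01*w1+x02*w2)*y0+(x01*w0+x11*w1+x12*w2)*y1+(x02*w0+x12*w1+x22*w2)*y2 = 0 ->
  (x00*w0+x01*w1+x02*w2)*w0+(x01*w0+x11*w1+x12*w2)*w1+(x02*w0+x12*w1+x22*w2)*w2 = 0 ->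
  (x00*(x11*x22-x12*x12)-x01*(x01*x22-x12*x02)+x02*(x01*x12-x11*x02))
    *((y1*w2-y2*w1)*(y1*w2-y2*w1)+(y2*w0-y0*w2)*(y2*w0-y0*w2)+(y0*w1-y1*w0)*(y0*w1-y1*w0))
  = - (x00*y0*y0+x11*y1*y1+x22*y2*y2+2*(x01*y0*y1+x02*y0*y2+x12*y1*y2))
    *((x00*w0+x01*w1+x02*w2)*(x00*w0+x01*w1+x02*w2)+(x01*w0+x11*w1+x12*w2)*(x01*w0+x11*w1+x12*w2)
      +(x02*w0+x12*w1+x22*w2)*(x02*w0+x12*w1+x22*w2)).
Proof. intros H1 H2. nsatz. Qed.

Lemma I4m X y w : symm X -> dot (mv X w) y = 0 -> dot (mv X w) w = 0 ->
  det3 X * dot (crs y w) (crs y w) = - qf2 X y * dot (mv X w) (mv X w).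
Proof. intros [h1 [h2 h3]] H1 H2. unfold dot, mv, qf2, crs, det3, cof3, sum3 in *; simpl in *.
  rewrite h1, h2, h3 in *.
  pose proof (I4 (X 0%nat 0%nat) (X 0%nat 1%nat) (X 0%nat 2%nat) (X 1%nat 1%nat) (X 1%nat 2%nat) (X 2%nat 2%nat)
     (y 0%nat) (y 1%nat) (y 2%nat) (w 0%nat) (w 1%nat) (w 2%nat)) as HI.
  assert (E1 : (X 0%nat 0%nat*w 0%nat+X 0%nat 1%nat*w 1%nat+X 0%nat 2%nat*w 2%nat)*y 0%nat
     +(X 0%nat 1%nat*w 0%nat+X 1%nat 1%nat*w 1%nat+X 1%nat 2%nat*w 2%nat)*y 1%nat
     +(X 0%nat 2%nat*w 0%nat+X 1%nat 2%nat*w 1%nat+X 2%nat 2%nat*w 2%nat)*y 2%nat = 0) by (rewrite <- H1; ring).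
  assert (E2 : (X 0%nat 0%nat*w 0%nat+X 0%nat 1%nat*w 1%nat+X 0%nat 2%nat*w 2%nat)*w 0%nat
     +(X 0%nat 1%nat*w 0%nat+X 1%nat 1%nat*w 1%nat+X 1%nat 2%nat*w 2%nat)*w 1%nat
     +(X 0%nat 2%nat*w 0%nat+X 1%nat 2%nat*w 1%nat+X 2%nat 2%nat*w 2%nat)*w 2%nat = 0) by (rewrite <- H2; ring).
  specialize (HI E1 E2). lra.
Qed.

Lemma mv_madd A E s w k : mv (madd A (msc s E)) w k = mv A w k + s * mv E w k.
Proof. unfold mv, madd, msc, sum3; ring. Qed.

Lemma dot_mvT E y w : symm E -> dot (mv E w) y = dot (mv E y) w.
Proof. intros [h1 [h2 h3]]. unfold dot, mv, sum3. rewrite h1, h2, h3. ring. Qed.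

Lemma dot_zero a b : (forall k, (k < 3)%nat -> a k = 0) -> dot a b = 0.
Proof. intro H. unfold dot, sum3. rewrite !H by lia. ring. Qed.

Lemma symm_madd A E s : symm A -> symm E -> symm (madd A (msc s E)).
Proof. intros [a1 [a2 a3]] [e1 [e2 e3]]. unfold symm, madd, msc. rewrite a1, a2, a3, e1, e2, e3. auto. Qed.

Lemma I3_aux A E y w s : symm A -> symm E ->
  (forall k, (k < 3)%nat -> mv A w k = 0) -> (forall k, (k < 3)%nat -> mv E y k = 0) -> dot (mv E w) w = 0 ->
  (det3 A + tr3 (mul3 (adj3 A) E) * s + tr3 (mul3 A (adj3 E)) * s ^ 2 + det3 E * s ^ 3) * dot (crs y w) (crs y w)
  = - qf2 A y * (s ^ 2 * dot (mv E w) (mv E w)).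
Proof. intros hA hE HAw HEy HEww.
  rewrite <- det3_lin.
  assert (Hs : symm (madd A (msc s E))) by (apply symm_madd; auto).
  rewrite (I4m _ y w Hs).
  - f_equal. f_equal.
    + assert (E0 : qf2 E y = 0).
      { replace (qf2 E y) with (dot (mv E y) y). apply dot_zero; auto.
        destruct hE as [h1 [h2 h3]]. unfold dot, mv, qf2, sum3. rewrite h1, h2, h3. ring. }
      assert (E1 : qf2 (madd A (msc s E)) y = qf2 A y + s * qf2 E y) by (unfold qf2, madd, msc, sum3; ring).
      rewrite E1, E0. ring.
    + unfold dot, sum3. rewrite !mv_madd. rewrite !HAw by lia. ring.
  - assert (E1 : dot (mv (madd A (msc s E)) w) y = dot (mv A w) y + s * dot (mv E y) w).
    { rewrite (dot_mvT E w y hE). unfold dot, sum3. rewrite !mv_madd. ring. }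
    rewrite E1, (dot_zero (mv A w)), (dot_zero (mv E y)); auto. ring.
  - assert (E1 : dot (mv (madd A (msc s E)) w) w = dot (mv A w) w + s * dot (mv E w) w).
    { unfold dot, sum3. rewrite !mv_madd. ring. }
    rewrite E1, (dot_zero (mv A w)), HEww; auto. ring.
Qed.

Lemma I3m A E y w : symm A -> symm E ->
  (forall k, (k < 3)%nat -> mv A w k = 0) -> (forall k, (k < 3)%nat -> mv E y k = 0) -> dot (mv E w) w = 0 ->
  tr3 (mul3 A (adj3 E)) * dot (crs y w) (crs y w) = - qf2 A y * dot (mv E w) (mv E w).
Proof. intros. pose proof (I3_aux A E y w 1 H H0 H1 H2 H3) as P1.
  pose proof (I3_aux A E y w (-1) H H0 H1 H2 H3) as P2.
  pose proof (I3_aux A E y w 0 H H0 H1 H2 H3) as P3. lra. Qed.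

Lemma adjadj M i j : (i < 3)%nat -> (j < 3)%nat -> cof3 (adj3 M) i j = det3 M * M j i.
Proof. intros Hi Hj. unfold adj3, det3, cof3, sum3.
  destruct i as [|[|[|i]]]; try lia; destruct j as [|[|[|j]]]; try lia; simpl; ring. Qed.

Lemma rank1 N : symm N -> (forall i j, (i < 3)%nat -> (j < 3)%nat -> cof3 N i j = 0) ->
  forall p q m, (p < 3)%nat -> (q < 3)%nat -> (m < 3)%nat -> N p q * N m m = N p m * N q m.
Proof. intros [h1 [h2 h3]] H p q m Hp Hq Hm.
  pose proof (H 0%nat 0%nat ltac:(lia) ltac:(lia)). pose proof (H 0%nat 1%nat ltac:(lia) ltac:(lia)).
  pose proof (H 0%nat 2%nat ltac:(lia) ltac:(lia)). pose proof (H 1%nat 0%nat ltac:(lia) ltac:(lia)).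
  pose proof (H 1%nat 1%nat ltac:(lia) ltac:(lia)). pose proof (H 1%nat 2%nat ltac:(lia) ltac:(lia)).
  pose proof (H 2%nat 0%nat ltac:(lia) ltac:(lia)). pose proof (H 2%nat 1%nat ltac:(lia) ltac:(lia)).
  pose proof (H 2%nat 2%nat ltac:(lia) ltac:(lia)).
  unfold cof3 in *; simpl in *. rewrite ?h1, ?h2, ?h3 in *.
  destruct p as [|[|[|p]]]; try lia; destruct q as [|[|[|q]]]; try lia; destruct m as [|[|[|m]]]; try lia;
  rewrite ?h1, ?h2, ?h3; lra.
Qed.

Lemma mixadj_tr X E : tr3 (mul3 (mixadj X E) E) = 2 * tr3 (mul3 X (adj3 E)).
Proof. unfold tr3, mul3, mixadj, adj3, cof3, madd, sum3; simpl. ring. Qed.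

Definition lin3 (w : vec) (C : nat -> nat -> nat -> R) : nat -> nat -> R :=
  fun k l => sum3 (fun p => w p * C p k l).

Lemma mixadj_bil X (C : nat -> nat -> nat -> R) w :
  sum3 (fun p => sum3 (fun q => w p * w q * tr3 (mul3 (mixadj X (C p)) (C q))))
  = tr3 (mul3 (mixadj X (lin3 w C)) (lin3 w C)).
Proof. unfold lin3, tr3, mul3, mixadj, adj3, cof3, madd, sum3; simpl. ring. Qed.

Lemma quad_rank1 (N : nat -> nat -> R) (w x : vec) a : a <> 0 ->
  (forall p q, (p < 3)%nat -> (q < 3)%nat -> N p q * a = w p * w q) ->
  a * qf2 N x = (dot w x) ^ 2.
Proof. intros Ha H.
  assert (E : forall p q, (p < 3)%nat -> (q < 3)%nat -> N p q = w p * w q / a).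
  { intros p q Hp Hq. rewrite <- (H p q Hp Hq). field. auto. }
  unfold qf2, dot, sum3. rewrite !E by lia. field. auto. Qed.

Lemma lin_rank1 (N M : nat -> nat -> R) (w : vec) a : a <> 0 ->
  (forall p q, (p < 3)%nat -> (q < 3)%nat -> N p q * a = w p * w q) ->
  a * sum3 (fun p => sum3 (fun q => N p q * M p q)) = sum3 (fun p => sum3 (fun q => w p * w q * M p q)).
Proof. intros Ha H.
  assert (E : forall p q, (p < 3)%nat -> (q < 3)%nat -> N p q = w p * w q / a).
  { intros p q Hp Hq. rewrite <- (H p q Hp Hq). field. auto. }
  unfold sum3. rewrite !E by lia. field. auto. Qed.

Lemma symm_adj M : symm M -> symm (adj3 M).
Proof. intros [h1 [h2 h3]]. unfold symm, adj3, cof3; simpl. rewrite h1, h2, h3. repeat split; ring. Qed.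

Lemma adj_col M m k : (m < 3)%nat -> (k < 3)%nat -> det3 M = 0 -> mv M (fun p => adj3 M p m) k = 0.
Proof. intros Hm Hk Hd.
  assert (E : mv M (fun p => adj3 M p m) k = if Nat.eqb k m then det3 M else 0).
  { unfold mv, adj3, det3, cof3, sum3.
    destruct m as [|[|[|m]]]; try lia; destruct k as [|[|[|k]]]; try lia; simpl; ring. }
  rewrite E. destruct (Nat.eqb k m); auto. Qed.

Lemma nsd_diag (N : nat -> nat -> R) : symm N -> (forall x, qf2 N x <= 0) ->
  (forall m, (m < 3)%nat -> N m m >= 0) -> forall p q, (p < 3)%nat -> (q < 3)%nat -> N p q = 0.
Proof. intros [h1 [h2 h3]] Hq Hd.
  pose proof (Hd 0%nat ltac:(lia)). pose proof (Hd 1%nat ltac:(lia)). pose proof (Hd 2%nat ltac:(lia)).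
  pose proof (Hq (mkv 1 0 0)). pose proof (Hq (mkv 0 1 0)). pose proof (Hq (mkv 0 0 1)).
  pose proof (Hq (mkv 1 1 0)). pose proof (Hq (mkv 1 (-1) 0)).
  pose proof (Hq (mkv 1 0 1)). pose proof (Hq (mkv 1 0 (-1))).
  pose proof (Hq (mkv 0 1 1)). pose proof (Hq (mkv 0 1 (-1))).
  unfold qf2, mkv, sum3 in *; simpl in *. rewrite h1, h2, h3 in *.
  intros p q Hp Hq'.
  destruct p as [|[|[|p]]]; try lia; destruct q as [|[|[|q]]]; try lia; rewrite ?h1, ?h2, ?h3; lra.
Qed.

Lemma ncross_pos A y w m : symm A -> (m < 3)%nat -> w m <> 0 -> qf2 A y > 0 ->
  (forall k, (k < 3)%nat -> mv A w k = 0) -> dot (crs y w) (crs y w) > 0.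
Proof. intros [h1 [h2 h3]] Hm Hw Hq HAw.
  assert (Hge : dot (crs y w) (crs y w) >= 0).
  { unfold dot, sum3.
    pose proof (Rle_0_sqr (crs y w 0%nat)). pose proof (Rle_0_sqr (crs y w 1%nat)). pose proof (Rle_0_sqr (crs y w 2%nat)).
    unfold Rsqr in *. lra. }
  destruct (Rle_lt_or_eq_dec 0 _ (Rge_le _ _ Hge)) as [Hlt|Heq]; [lra|exfalso].
  assert (Hc : crs y w 0%nat = 0 /\ crs y w 1%nat = 0 /\ crs y w 2%nat = 0).
  { unfold dot, sum3 in Heq.
    pose proof (Rle_0_sqr (crs y w 0%nat)). pose proof (Rle_0_sqr (crs y w 1%nat)). pose proof (Rle_0_sqr (crs y w 2%nat)).
    repeat split; apply Rsqr_0_uniq; unfold Rsqr in *; lra. }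
  destruct Hc as [c0 [c1 c2]]. unfold crs in c0, c1, c2; simpl in c0, c1, c2.
  pose proof (HAw 0%nat ltac:(lia)) as a0. pose proof (HAw 1%nat ltac:(lia)) as a1. pose proof (HAw 2%nat ltac:(lia)) as a2.
  unfold mv, sum3 in a0, a1, a2. rewrite h1, h2, h3 in *.
  assert (E : w m * qf2 A y = 0).
  { unfold qf2, sum3. rewrite h1, h2, h3.
    destruct m as [|[|[|m]]]; try lia.
    - transitivity (y 0%nat * ((A 0%nat 0%nat * w 0%nat + A 0%nat 1%nat * w 1%nat + A 0%nat 2%nat * w 2%nat) * y 0%nat
        + (A 0%nat 1%nat * w 0%nat + A 1%nat 1%nat * w 1%nat + A 1%nat 2%nat * w 2%nat) * y 1%nat
        + (A 0%nat 2%nat * w 0%nat + A 1%nat 2%nat * w 1%nat + A 2%nat 2%nat * w 2%nat) * y 2%nat)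
        + (y 0%nat * A 0%nat 1%nat + y 1%nat * A 1%nat 1%nat + y 2%nat * A 1%nat 2%nat) * (w 0%nat * y 1%nat - y 0%nat * w 1%nat)
        + (y 0%nat * A 0%nat 2%nat + y 1%nat * A 1%nat 2%nat + y 2%nat * A 2%nat 2%nat) * (w 0%nat * y 2%nat - y 0%nat * w 2%nat)).
      ring. rewrite a0, a1, a2. replace (w 0%nat * y 1%nat - y 0%nat * w 1%nat) with (-(y 0%nat * w 1%nat - y 1%nat * w 0%nat)) by ring.
      rewrite c2. replace (w 0%nat * y 2%nat - y 0%nat * w 2%nat) with (y 2%nat * w 0%nat - y 0%nat * w 2%nat) by ring. rewrite c1. ring.
    - transitivity (y 1%nat * ((A 0%nat 0%nat * w 0%nat + A 0%nat 1%nat * w 1%nat + A 0%nat 2%nat * w 2%nat) * y 0%nat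
        + (A 0%nat 1%nat * w 0%nat + A 1%nat 1%nat * w 1%nat + A 1%nat 2%nat * w 2%nat) * y 1%nat
        + (A 0%nat 2%nat * w 0%nat + A 1%nat 2%nat * w 1%nat + A 2%nat 2%nat * w 2%nat) * y 2%nat)
        + (y 0%nat * A 0%nat 0%nat + y 1%nat * A 0%nat 1%nat + y 2%nat * A 0%nat 2%nat) * (w 1%nat * y 0%nat - y 1%nat * w 0%nat)
        + (y 0%nat * A 0%nat 2%nat + y 1%nat * A 1%nat 2%nat + y 2%nat * A 2%nat 2%nat) * (w 1%nat * y 2%nat - y 1%nat * w 2%nat)).
      ring. rewrite a0, a1, a2. replace (w 1%nat * y 0%nat - y 1%nat * w 0%nat) with (y 0%nat * w 1%nat - y 1%nat * w 0%nat) by ring.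
      rewrite c2. replace (w 1%nat * y 2%nat - y 1%nat * w 2%nat) with (-(y 1%nat * w 2%nat - y 2%nat * w 1%nat)) by ring. rewrite c0. ring.
    - transitivity (y 2%nat * ((A 0%nat 0%nat * w 0%nat + A 0%nat 1%nat * w 1%nat + A 0%nat 2%nat * w 2%nat) * y 0%nat
        + (A 0%nat 1%nat * w 0%nat + A 1%nat 1%nat * w 1%nat + A 1%nat 2%nat * w 2%nat) * y 1%nat
        + (A 0%nat 2%nat * w 0%nat + A 1%nat 2%nat * w 1%nat + A 2%nat 2%nat * w 2%nat) * y 2%nat)
        + (y 0%nat * A 0%nat 0%nat + y 1%nat * A 0%nat 1%nat + y 2%nat * A 0%nat 2%nat) * (w 2%nat * y 0%nat - y 2%nat * w 0%nat)
        + (y 0%nat * A 0%nat 1%nat + y 1%nat * A 1%nat 1%nat + y 2%nat * A 1%nat 2%nat) * (w 2%nat * y 1%nat - y 2%nat * w 1%nat)).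
      ring. rewrite a0, a1, a2. replace (w 2%nat * y 0%nat - y 2%nat * w 0%nat) with (-(y 2%nat * w 0%nat - y 0%nat * w 2%nat)) by ring.
      rewrite c1. replace (w 2%nat * y 1%nat - y 2%nat * w 1%nat) with (y 1%nat * w 2%nat - y 2%nat * w 1%nat) by ring. rewrite c0. ring. }
  apply Rmult_integral in E. destruct E; [auto|lra].
Qed.

Lemma L1 d v w y : dot (mv (Am d v) w) y = dot v (mv (Am d y) w).
Proof. unfold dot, mv, Am, fPP, cc, sum3. ring. Qed.
Lemma L2 d v w : dot (mv (Am d v) w) w = dot v (mv (lin3 w (Cm d)) w).
Proof. unfold dot, mv, Am, fPP, lin3, Cm, cc, sum3. ring. Qed.
Lemma L3 d w y k : mv (lin3 w (Cm d)) y k = mv (Am d y) w k.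
Proof. unfold mv, Am, fPP, lin3, Cm, cc, sum3. ring. Qed.
Lemma L4 d w : symm (lin3 w (Cm d)).
Proof. unfold symm, lin3, Cm, cc, sum3. repeat split; ring. Qed.

Lemma CV_qfA d y0 : CV (fun y => qf2 (Am d y) y0).
Proof. unfold qf2, sum3. repeat (apply CV_plus || apply CV_mult); (apply CV_const || apply CV_coord || apply CVM_Am). Qed.

Lemma qfA_euler d y : qf2 (Am d y) y = 6 * cubic d y.
Proof. rewrite euler_f. unfold qf2, evf. field. Qed.

Lemma dot_sq_nonneg v : dot v v >= 0.
Proof. unfold dot, sum3.
  pose proof (Rle_0_sqr (v 0%nat)). pose proof (Rle_0_sqr (v 1%nat)). pose proof (Rle_0_sqr (v 2%nat)).
  unfold Rsqr in *. lra. Qed.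

Lemma dot_sq_zero v : dot v v = 0 -> forall k, (k < 3)%nat -> v k = 0.
Proof. intros H k Hk. unfold dot, sum3 in H.
  pose proof (Rle_0_sqr (v 0%nat)). pose proof (Rle_0_sqr (v 1%nat)). pose proof (Rle_0_sqr (v 2%nat)).
  destruct k as [|[|[|k]]]; try lia; apply Rsqr_0_uniq; unfold Rsqr in *; lra. Qed.

Lemma dot_zero_r a b : (forall k, (k < 3)%nat -> b k = 0) -> dot a b = 0.
Proof. intro H. unfold dot, sum3. rewrite !H by lia. ring. Qed.

Lemma dichot d y0 z :
  cubic d y0 > 0 -> Hp d y0 = 0 ->
  (forall x, qf2 (Bx d y0) x >= 0) ->
  (exists i j, (i < 3)%nat /\ (j < 3)%nat /\
     sum3 (fun p => sum3 (fun q => Bx d y0 p q * (cc d i j q * cc d i j p))) <> 0) ->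
  (forall t, 0 < t <= 1 -> Hp d (yl y0 z t) > 0) ->
  Qv d y0 > 0 \/ Pv d y0 > 0.
Proof.
  intros Hf0 HH0 HBpsd [i [j [Hi [Hj HT]]]] Hline.
  set (f0 := cubic d y0) in *.
  set (A0 := Am d y0).
  set (Ab := adj3 A0).
  assert (HB : forall p q, (p < 3)%nat -> (q < 3)%nat -> Bx d y0 p q = - (f0 ^ 2 / 2) * Ab p q).
  { intros p q Hp Hq. unfold Bx. rewrite adjGx by auto. rewrite HH0. unfold Ab, A0, f0. field. }
  assert (Hf2 : f0 ^ 2 / 2 > 0) by (apply Rdiv_lt_0_compat; [apply pow_lt|]; lra).
  assert (Hnsd : forall x, qf2 Ab x <= 0).
  { intro x. specialize (HBpsd x).
    assert (E : qf2 (Bx d y0) x = - (f0 ^ 2 / 2) * qf2 Ab x) by (unfold qf2, sum3; rewrite !HB by lia; ring).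
    rewrite E in HBpsd. nra. }
  assert (HsA0 : symm A0) by apply Am_symm.
  assert (HsAb : symm Ab) by (apply symm_adj; auto).
  assert (Hdet : det3 A0 = 0) by exact HH0.
  assert (Hm : exists m, (m < 3)%nat /\ Ab m m < 0).
  { destruct (Rlt_dec (Ab 0%nat 0%nat) 0) as [h|h0]; [exists 0%nat; split; [lia|auto]|].
    destruct (Rlt_dec (Ab 1%nat 1%nat) 0) as [h|h1]; [exists 1%nat; split; [lia|auto]|].
    destruct (Rlt_dec (Ab 2%nat 2%nat) 0) as [h|h2]; [exists 2%nat; split; [lia|auto]|].
    exfalso. apply HT.
    assert (Z : forall p q, (p < 3)%nat -> (q < 3)%nat -> Ab p q = 0).
    { apply nsd_diag; auto. intros m Hm. destruct m as [|[|[|m]]]; try lia; lra. }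
    unfold sum3. rewrite !HB by lia. rewrite !Z by lia. ring. }
  destruct Hm as [m [Hm Ham]].
  set (al := Ab m m) in *.
  set (w := fun p => Ab p m).
  assert (Hal : al <> 0) by lra.
  assert (Hr1 : forall p q, (p < 3)%nat -> (q < 3)%nat -> Ab p q * al = w p * w q).
  { intros p q Hp Hq. unfold w, al. apply rank1; auto.
    intros a b Ha Hb. unfold Ab. rewrite adjadj by auto. rewrite Hdet. ring. }
  set (HPv := fun p => HP d p y0).
  assert (HQ : al * Qv d y0 = - (f0 ^ 2 / 2) * (dot w HPv) ^ 2).
  { assert (E : Qv d y0 = - (f0 ^ 2 / 2) * qf2 Ab HPv) by (unfold Qv, qf2, HPv, sum3; rewrite !HB by lia; ring).
    rewrite E. rewrite <- (quad_rank1 Ab w HPv al Hal Hr1). ring. }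
  set (E := lin3 w (Cm d)).
  set (q := dot (mv E w) w).
  assert (Hhw : al * dot w HPv = q).
  { assert (E1 : forall p, (p < 3)%nat -> al * HPv p = sum3 (fun k => sum3 (fun l => w k * w l * Cm d p l k))).
    { intros p Hp. unfold HPv, HP, tr3, mul3. fold A0. fold Ab.
      rewrite <- (lin_rank1 Ab (fun k l => Cm d p l k) w al Hal Hr1). reflexivity. }
    unfold dot at 1. unfold sum3 at 1.
    replace (al * (w 0%nat * HPv 0%nat + w 1%nat * HPv 1%nat + w 2%nat * HPv 2%nat)) with
      (w 0%nat * (al * HPv 0%nat) + w 1%nat * (al * HPv 1%nat) + w 2%nat * (al * HPv 2%nat)) by ring.
    rewrite !E1 by lia. unfold q, E, dot, mv, lin3, sum3. ring. }
  destruct (Req_dec q 0) as [Hq0|Hq0].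
  2:{ left. assert (Hh : dot w HPv <> 0) by (intro Hc; rewrite Hc in Hhw; lra).
      assert (Hsq : (dot w HPv) ^ 2 > 0) by (apply pow_lt_1_compat || (simpl; nra)).
      assert (al * Qv d y0 < 0) by (rewrite HQ; nra). nra. }
  assert (HAw : forall k, (k < 3)%nat -> mv A0 w k = 0).
  { intros k Hk. unfold w, Ab. apply adj_col; auto. }
  assert (HEy : forall k, (k < 3)%nat -> mv E y0 k = 0).
  { intros k Hk. unfold E. rewrite L3. apply HAw; auto. }
  assert (HsE : symm E) by apply L4.
  pose proof (I3m A0 E y0 w HsA0 HsE HAw HEy Hq0) as HI3.
  assert (HqA : qf2 A0 y0 = 6 * f0) by (apply qfA_euler).
  assert (HN : dot (crs y0 w) (crs y0 w) > 0).
  { apply (ncross_pos A0 y0 w m); auto. unfold w. fold al. auto. lra. }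
  assert (HHPP : al * sum3 (fun p => sum3 (fun q => Ab p q * HPP d p q y0)) = 2 * tr3 (mul3 A0 (adj3 E))).
  { rewrite (lin_rank1 Ab (fun p q => HPP d p q y0) w al Hal Hr1).
    unfold HPP. fold A0. rewrite (mixadj_bil A0 (Cm d) w). fold E. apply mixadj_tr. }
  assert (HPv' : Pv d y0 = (f0 ^ 2 / 2) * sum3 (fun p => sum3 (fun q => Ab p q * HPP d p q y0))).
  { unfold Pv, sum3. rewrite !HB by lia. ring. }
  pose proof (dot_sq_nonneg (mv E w)) as HV.
  destruct (Rle_lt_or_eq_dec 0 _ (Rge_le _ _ HV)) as [HVp|HV0].
  - right. rewrite HqA in HI3.
    assert (Htr : tr3 (mul3 A0 (adj3 E)) < 0).
    { assert (tr3 (mul3 A0 (adj3 E)) * dot (crs y0 w) (crs y0 w) < 0).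
      { rewrite HI3. assert (6 * f0 * dot (mv E w) (mv E w) > 0) by (apply Rmult_lt_0_compat; lra). lra. }
      nra. }
    rewrite HPv'. apply Rmult_lt_0_compat; auto. nra.
  - exfalso. symmetry in HV0.
    assert (HEw : forall k, (k < 3)%nat -> mv E w k = 0) by (apply dot_sq_zero; auto).
    pose proof (CV_qfA d y0 y0 z 0) as Hc.
    assert (Hg0 : qf2 (Am d (yl y0 z 0)) y0 = 6 * f0) by (rewrite yl0; apply qfA_euler).
    destruct (cont0 (fun t => qf2 (Am d (yl y0 z t)) y0) (3 * f0) Hc ltac:(lra)) as [a [Ha Hat]].
    set (t := Rmin 1 (a / 2)).
    assert (Ht : 0 < t <= 1) by (unfold t; split; [apply Rmin_pos; lra| apply Rmin_l]).
    assert (Hta : t < a) by (unfold t; pose proof (Rmin_r 1 (a/2)); lra).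
    specialize (Hat t ltac:(lra)). cbv beta in Hat. rewrite Hg0 in Hat. apply Rabs_def2 in Hat.
    set (X := Am d (yl y0 z t)).
    assert (HqX : qf2 X y0 > 0) by (unfold X; lra).
    assert (H1 : dot (mv X w) y0 = 0) by (unfold X; rewrite L1; apply dot_zero_r; fold A0; auto).
    assert (H2 : dot (mv X w) w = 0) by (unfold X; rewrite L2; fold E; apply dot_zero_r; auto).
    pose proof (I4m X y0 w (Am_symm d _) H1 H2) as HI4.
    pose proof (Hline t Ht) as HHt. unfold Hp in HHt. fold X in HHt.
    pose proof (dot_sq_nonneg (mv X w)) as HXw.
    assert (det3 X * dot (crs y0 w) (crs y0 w) > 0) by (apply Rmult_lt_0_compat; lra).
    assert (qf2 X y0 * dot (mv X w) (mv X w) >= 0) by nra.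
    lra.
Qed.

Lemma lim_nonneg (g : R -> R) : continuity_pt g 0 -> (forall t, 0 < t <= 1 -> g t >= 0) -> g 0 >= 0.
Proof. intros Hc Hpos. destruct (Rge_dec (g 0) 0) as [h|h]; auto. exfalso.
  destruct (cont0 g (- g 0) Hc ltac:(lra)) as [a [Ha Hat]].
  set (t := Rmin 1 (a / 2)).
  assert (Ht : 0 < t <= 1) by (unfold t; split; [apply Rmin_pos; lra| apply Rmin_l]).
  assert (Hta : t < a) by (unfold t; pose proof (Rmin_r 1 (a/2)); lra).
  specialize (Hat t ltac:(lra)). specialize (Hpos t Ht). apply Rabs_def2 in Hat. lra. Qed.

Lemma CVpt F y0 z : CV F -> continuity_pt (fun t => F (yl y0 z t)) 0.
Proof. intro H. apply H. Qed.

Lemma Hess_eq d y : Hess (cubic d) y = Hp d y.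
Proof. unfold Hess, Hp. apply det3_ext. intros p q Hp Hq. unfold Am.
  rewrite pd_cubic by auto. rewrite pd_fP by auto. reflexivity. Qed.

Lemma Gmat_ext d y : Mext (Gmat (cubic d) y) (Gx d y).
Proof. intros p q Hp Hq. unfold Gmat, Gx. rewrite !pd_cubic by auto. rewrite pd_fP by auto. reflexivity. Qed.

Lemma T_eq d y i j : (i < 3)%nat -> (j < 3)%nat ->
  tr3 (mul3 (Bmat (cubic d) y) (Cmat (cubic d) i j y)) =
  sum3 (fun p => sum3 (fun q => Bx d y p q * (cc d i j q * cc d i j p))).
Proof. intros Hi Hj.
  assert (HC : Mext (Cmat (cubic d) i j y) (fun p q => cc d i j p * cc d i j q)).
  { intros p q Hp Hq. unfold Cmat. rewrite !pd_cubic by auto. rewrite !pd_fP by auto. rewrite !pd_fPP by auto. reflexivity. }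
  unfold Bmat. rewrite (tr3_ext _ _ (mul3_ext _ _ _ _ (adj3_ext _ _ (Gmat_ext d y)) HC)).
  unfold tr3, mul3, Bx, sum3. reflexivity. Qed.

Theorem lemma3p6 (d : nat -> nat -> nat -> R) (K : vec -> Prop) (y0 : vec) :
  kahler_cone_like (cubic d) K ->
  nonzero3 y0 ->
  in_boundary K y0 ->
  cubic d y0 <> 0 ->
  Hess (cubic d) y0 = 0 ->
  (exists i j, (i < 3)%nat /\ (j < 3)%nat /\
     tr3 (mul3 (Bmat (cubic d) y0) (Cmat (cubic d) i j y0)) <> 0) ->
  forall (eps M : R), eps > 0 ->
    exists y, K y /\ close y y0 eps /\ scal (cubic d) y > M.
Proof.
  intros HK _ [_ Hbd] Hf0ne HH0 [i [j [Hi [Hj HT]]]] eps M Heps.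
  rewrite Hess_eq in HH0.
  rewrite T_eq in HT by auto.
  destruct (Hbd eps Heps) as [z [Hz Hzc]].
  assert (Hseg : forall t, 0 < t <= 1 -> K (yl y0 z t)) by (intros t Ht; apply (seg (cubic d)); auto).
  assert (Hfacts : forall t, 0 < t <= 1 ->
     cubic d (yl y0 z t) > 0 /\ Hp d (yl y0 z t) > 0 /\ forall x, qf (Bx d (yl y0 z t)) x >= 0).
  { intros t Ht. apply (K_facts d K); auto. }
  assert (Hf0 : cubic d y0 > 0).
  { assert (G : (fun t => cubic d (yl y0 z t)) 0 >= 0).
    { apply (lim_nonneg (fun t => cubic d (yl y0 z t))). apply CVpt, CV_cubic. intros t Ht. destruct (Hfacts t Ht) as [a _]. lra. }
    cbv beta in G. rewrite yl0 in G. lra. }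
  assert (HBpsd : forall x, qf2 (Bx d y0) x >= 0).
  { intro x. assert (G : (fun t => qf (Bx d (yl y0 z t)) x) 0 >= 0).
    { apply (lim_nonneg (fun t => qf (Bx d (yl y0 z t)) x)). apply (CVpt (fun y => qf (Bx d y) x)), CV_qfB.
      intros t Ht. destruct (Hfacts t Ht) as [_ [_ c]]. apply c. }
    cbv beta in G. rewrite yl0 in G. exact G. }
  assert (Hline : forall t, 0 < t <= 1 -> Hp d (yl y0 z t) > 0) by (intros t Ht; apply Hfacts; auto).
  assert (Hdich : Qv d y0 > 0 \/ Pv d y0 > 0).
  { apply (dichot d y0 z); auto. exists i, j. auto. }
  destruct (asym (fun t => cubic d (yl y0 z t)) (fun t => Hp d (yl y0 z t)) (fun t => Qv d (yl y0 z t))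
     (fun t => Pv d (yl y0 z t)) M) as [t [Ht Hsc]].
  - apply CVpt, CV_cubic.
  - apply CVpt, CV_Hp.
  - apply CVpt, CV_Qv.
  - apply CVpt, CV_Pv.
  - cbv beta. rewrite yl0. auto.
  - cbv beta. rewrite yl0. auto.
  - intros t Ht. destruct (Hfacts t Ht) as [a [b c]]. repeat split; auto.
    apply (c (fun p => HP d p (yl y0 z t))).
  - cbv beta. rewrite !yl0. auto.
  - exists (yl y0 z t). split; [apply Hseg; auto|]. split.
    + apply yl_close; auto. lra.
    + destruct (Hfacts t Ht) as [a [b _]]. rewrite scal_eq by (split; auto). exact Hsc.
Qed.
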